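(* For any $\Delta:N\setminus\{0\}\to\mathbb N$ and any $g\in\mathbb N$, the set of types $(\Gamma,u)$ of tropical curves of degree $\Delta$ and genus $g$ that are realized by at least one tropical curve (i.e. $\mathcal T_{(\Gamma,u)}\neq\emptyset$) is finite.
   Context: $N$ is a free abelian group of rank $n\ge2$, $N_\mathbb Q=N\otimes\mathbb Q$, $N_\mathbb R=N\otimes\mathbb R$. An open graph $\Gamma$ is obtained from a connected finite graph without divalent vertices by deleting its univalent vertices; vertices $\Gamma^{[0]}$, edges $\Gamma^{[1]}$, unbounded (non-compact) edges $\Gamma^{[1]}_\infty$, weights $w:\Gamma^{[1]}\to\mathbb Z_{>0}$; flags are pairs $(V,E)$ with $V$ an endpoint of $E$. A tropical curve is (an isomorphism class of) a proper map $h:\Gamma\to N_\mathbb R$ such that each $h|_E$ is an embedding into an affine line of rational slope, $h(V)\in N_\mathbb Q$, and at each vertex $\sum_{E\ni V}w(E)u_{(V,E)}=0$, where $u_{(V,E)}\in N$ is the primitive vector from $h(V)$ in the direction of $h(E)$. Its type is the weighted graph $\Gamma$ together with the map $u$ on flags; $\mathcal T_{(\Gamma,u)}$ is the set of tropical curves of that type. Genus $=b_1(\Gamma)$. Degree: $\Delta(v)=\#\{E\in\Gamma^{[1]}_\infty:w(E)u_{(V,E)}=v\}$, $V$ the vertex of $E$. *)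

(* Defs.v *)
From HB Require Import structures.
From mathcomp Require Import all_boot all_order all_algebra.
Set Implicit Arguments. Unset Strict Implicit. Unset Printing Implicit Defensive.
Import Order.TTheory GRing.Theory Num.Theory.
Local Open Scope ring_scope.

(* The lattice N of rank n is 'rV[int]_n, N_Q is 'rV[rat]_n.

   A (candidate) type (Gamma, u) of a tropical curve, in half-edge (flag)
   representation:
   - vertices   : 'I_nV
   - flags      : 'I_nF, each flag f sits at the vertex [fv f];
   - [opp_flag] : an involution on flags; a 2-cycle {f, opp_flag f} is a
                  bounded edge (with its two flags), a fixed point f is an
                  unbounded edge (with its unique flag);
   - [wt f]     : the weight of the edge of the flag f;
   - [dir f]    : the vector u_(V,E) in N attached to the flag f = (V,E). *)
Record ttype (n : nat) := TType {
  nV : nat;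
  nF : nat;
  fv : 'I_nF -> 'I_nV;
  opp_flag : 'I_nF -> 'I_nF;
  wt : 'I_nF -> nat;
  dir : 'I_nF -> 'rV[int]_n }.

Section Defs.
Variable n : nat.
Implicit Type T : ttype n.

Definition bounded T (f : 'I_(nF T)) : bool := opp_flag f != f.

Definition adjacent T : rel 'I_(nV T) :=
  fun x y => [exists f : 'I_(nF T), (fv f == x) && (fv (opp_flag f) == y)].

(* valence of a vertex (a loop counts twice) *)
Definition valence T (v : 'I_(nV T)) : nat := #|[set f : 'I_(nF T) | fv f == v]|.

(* (Gamma, wt) is a weighted open graph: obtained from a connected finite graph
   without divalent vertices by deleting its univalent vertices (which then
   become the free ends of the unbounded edges). *)
Definition is_open_graph T : Prop :=
  (0 < nV T)%N /\
  (forall f : 'I_(nF T), opp_flag (opp_flag f) = f) /\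
  (forall f : 'I_(nF T), (0 < wt f)%N) /\
  (forall f : 'I_(nF T), wt (opp_flag f) = wt f) /\
  (forall x y : 'I_(nV T), connect (@adjacent T) x y) /\
  (forall v : 'I_(nV T), valence v <> 1%N /\ valence v <> 2%N).

Definition nbounded T : nat := (#|[set f : 'I_(nF T) | bounded f]|)./2.

(* genus b_1(Gamma) of a connected open graph: #bounded edges - #vertices + 1
   (the unbounded edges are contractible rays) *)
Definition genus T : nat := (nbounded T + 1 - nV T)%N.

Definition has_degree (Delta : 'rV[int]_n -> nat) T : Prop :=
  forall v : 'rV[int]_n, v != 0 ->
    Delta v = #|[set f : 'I_(nF T) | ~~ bounded f & dir f *+ wt f == v]|.

Definition primitive (x : 'rV[int]_n) : Prop :=
  forall (k : int) (y : 'rV[int]_n), x = k *: y -> k = 1 \/ k = -1.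

Definition toQ (x : 'rV[int]_n) : 'rV[rat]_n := map_mx (fun z : int => z%:~R) x.

(* A tropical curve of type T, given by the positions h(V) in N_Q of its
   vertices: every u_(V,E) is the primitive vector from h(V) in the direction
   of h(E) (for a bounded edge E = {V,V'}, h(E) is the open segment from h(V)
   to h(V'); for an unbounded edge it is a ray h(V) + R_{>0} u_(V,E)), and the
   balancing condition holds at every vertex. *)
Definition is_tropical_curve {T} (h : 'I_(nV T) -> 'rV[rat]_n) : Prop :=
  (forall f : 'I_(nF T), primitive (dir f)) /\
  (forall f : 'I_(nF T), bounded f ->
     exists2 l : rat, 0 < l & h (fv (opp_flag f)) - h (fv f) = l *: toQ (dir f)) /\
  (forall v : 'I_(nV T), \sum_(f : 'I_(nF T) | fv f == v) dir f *+ wt f = 0).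

Definition realized T : Prop := exists h : 'I_(nV T) -> 'rV[rat]_n, is_tropical_curve h.

Definition ttype_iso T T' : Prop :=
  exists (sV : 'I_(nV T) -> 'I_(nV T')) (sF : 'I_(nF T) -> 'I_(nF T')),
    bijective sV /\ bijective sF /\
    (forall f : 'I_(nF T), fv (sF f) = sV (fv f)) /\
    (forall f : 'I_(nF T), opp_flag (sF f) = sF (opp_flag f)) /\
    (forall f : 'I_(nF T), wt (sF f) = wt f) /\
    (forall f : 'I_(nF T), dir (sF f) = dir f).

End Defs.

(* Main.v *)
Require Import Defs.
From HB Require Import structures.
From mathcomp Require Import all_boot all_order all_algebra.
From mathcomp Require Import zify ring lra.
From Stdlib Require Import Classical.
Set Implicit Arguments. Unset Strict Implicit. Unset Printing Implicit Defensive.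
Import Order.TTheory GRing.Theory Num.Theory.
Local Open Scope ring_scope.

Lemma prim_div n (x : 'rV[int]_n) (p : int) : primitive x -> 0 < p ->
  (forall j, (x 0 j \in dvdz p)) -> p = 1.
Proof.
move=> px p0 hd.
have : x = p *: \row_j (divz (x 0 j) p).
  apply/rowP => j; rewrite !mxE mulrC divzK //.
move=> /px [] // pm; by rewrite pm in p0.
Qed.

Lemma prim_eq n (x y : 'rV[int]_n) (a b : rat) : primitive x -> primitive y ->
  0 < a -> 0 < b -> a *: toQ x = b *: toQ y -> x = y.
Proof.
move=> px py a0 b0 e.
set r := b / a.
have r0 : 0 < r by rewrite divr_gt0.
have ej : forall j, x 0 j * denq r = numq r * y 0 j.
  move=> j; apply: (@intr_inj rat).
  have := congr1 (fun M : 'rV[rat]_n => M 0 j) e; rewrite !mxE => e'.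
  rewrite !rmorphM /= numqE.
  have -> : (x 0 j)%:~R = r * (y 0 j)%:~R :> rat.
    rewrite /r; apply: (mulfI (x:=a)); first by rewrite gt_eqF.
    by rewrite e' mulrA mulrCA mulfV ?mulr1 // gt_eqF.
  by rewrite mulrAC.
have cp : coprimez (numq r) (denq r) by rewrite coprimezE coprime_num_den.
have p1 : numq r = 1.
  apply: (prim_div px); first by rewrite numq_gt0.
  by move=> j; rewrite -(Gauss_dvdzl _ cp) ej dvdz_mulr.
have q1 : denq r = 1.
  apply: (prim_div py); first by rewrite denq_gt0.
  move=> j; rewrite coprimez_sym in cp.
  by rewrite -(Gauss_dvdzr _ cp) -ej dvdz_mull.
apply/rowP => j; have := ej j; rewrite p1 q1 mulr1 mul1r; apply.
Qed.

Lemma primN n (x : 'rV[int]_n) : primitive x -> primitive (- x).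
Proof.
move=> px k y e; have : x = (- k) *: y by rewrite scaleNr -e opprK.
by case/px => e'; [right | left]; rewrite -[k]opprK e'.
Qed.

Lemma toQN n (x : 'rV[int]_n) : toQ (- x) = - toQ x.
Proof. by apply/rowP => j; rewrite !mxE rmorphN. Qed.

Section Flux.
Variable n : nat.
Variable T : ttype n.
Hypothesis og : is_open_graph T.
Variable h : 'I_(nV T) -> 'rV[rat]_n.
Hypothesis tc : is_tropical_curve h.

Lemma oppK (f : 'I_(nF T)) : opp_flag (opp_flag f) = f.
Proof. by case: og => _ [H _]. Qed.

Lemma wt_opp (f : 'I_(nF T)) : wt (opp_flag f) = wt f.
Proof. by case: og => _ [_ [_ [H _]]]. Qed.

Lemma bounded_opp (f : 'I_(nF T)) : bounded (opp_flag f) = bounded f.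
Proof.
by rewrite /bounded (oppK f) eq_sym.
Qed.

Lemma opp_dir (f : 'I_(nF T)) : bounded f -> dir (opp_flag f) = - dir f.
Proof.
case: tc => pr [hb _] bf.
have bf' : bounded (opp_flag f) by rewrite bounded_opp.
case: (hb _ bf) => l l0 e1; case: (hb _ bf') => l' l0' e2.
rewrite (oppK f) in e2.
apply: (prim_eq (a := l') (b := l)) => //; first exact: primN.
by rewrite toQN scalerN -e1 -e2 opprB.
Qed.

Lemma flux_neg (f : 'I_(nF T)) j : bounded f -> dir f 0 j < 0 ->
  `|dir f 0 j *+ wt f| <= \sum_(g : 'I_(nF T) | ~~ bounded g) `|dir g 0 j *+ wt g|.
Proof.
case: tc => pr [hb bal] bf dneg.
set c := h (fv (opp_flag f)) 0 j.
pose U := fun v : 'I_(nV T) => c < h v 0 j.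
pose F := fun g : 'I_(nF T) => dir g 0 j *+ wt g.
have hent : forall g, bounded g -> exists2 l : rat, 0 < l &
    h (fv (opp_flag g)) 0 j - h (fv g) 0 j = l * (dir g 0 j)%:~R.
  move=> g bg; case: (hb g bg) => l l0 e; exists l => //.
  by have := congr1 (fun M : 'rV[rat]_n => M 0 j) e; rewrite !mxE.
have s0 : \sum_(g | U (fv g)) F g = 0.
  rewrite (partition_big (@fv n T) U) //=.
  apply: big1 => v Uv.
  have := congr1 (fun M : 'rV[int]_n => M 0 j) (bal v); rewrite summxE mxE => e.
  rewrite -[X in _ = X]e; apply: eq_big => g; last by move=> _; rewrite mulmxnE.
  by case: (fv g =P v) => [->|]; rewrite ?Uv ?andbF.
pose P1 := fun g => U (fv g) && ~~ bounded g.
pose P2 := fun g => U (fv g) && bounded g && U (fv (opp_flag g)).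
pose P3 := fun g => U (fv g) && bounded g && ~~ U (fv (opp_flag g)).
have spl : \sum_(g | U (fv g)) F g =
    \sum_(g | P1 g) F g + (\sum_(g | P2 g) F g + \sum_(g | P3 g) F g).
  by rewrite (bigID (@bounded n T)) /= addrC [X in _ + X](bigID (fun g => U (fv (opp_flag g)))) /=. 
have s2 : \sum_(g | P2 g) F g = 0.
  have e : \sum_(g | P2 g) F g = - \sum_(g | P2 g) F g.
    rewrite [LHS](reindex_inj (inv_inj oppK)) -sumrN; apply: eq_big => g.
      rewrite /P2 (oppK g) bounded_opp.
      by case: (U (fv g)); case: (U (fv (opp_flag g))); case: (bounded g).
    move=> /andP [/andP [_ bg] _]; rewrite (bounded_opp g) in bg; rewrite /F (opp_dir bg) (wt_opp g) mxE mulNrn.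
    by [].
  lia.
have s3 : forall g, P3 g -> F g <= 0.
  move=> g /andP [/andP [Ug bg] nU]; rewrite /F mulrn_wle0 //.
  case: (hent g bg) => l l0 e.
  rewrite /U -leNgt in nU.
  have : l * (dir g 0 j)%:~R < 0 by rewrite -e; move: Ug nU; rewrite /U; lra.
  by rewrite pmulr_rlt0 // ltrz0 => /ltW.
have Pf : P3 f.
  rewrite /P3 bf /U ltxx andbT /=.
  case: (hent f bf) => l l0 e.
  have : l * (dir f 0 j)%:~R < 0 by rewrite pmulr_rlt0 // ltrz0.
  rewrite -e /c; lra.
have key : - \sum_(g | P3 g) F g = \sum_(g | P1 g) F g.
  move: s0; rewrite spl s2 add0r; lia.
rewrite [`|_|]ler0_norm; last exact: s3.
apply: (@le_trans _ _ (- \sum_(g | P3 g) F g)).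
  rewrite (bigD1 f) //= opprD lerDl -sumrN sumr_ge0 // => g /andP [Pg _].
  by rewrite oppr_ge0 s3.
rewrite key (bigID (fun g => U (fv g)) (fun g => ~~ bounded g)) /=.
apply: (@le_trans _ _ (\sum_(g | ~~ bounded g && U (fv g)) `|F g|)).
  rewrite [X in _ <= X](eq_bigl (fun g => P1 g)); last by move=> g; rewrite /P1 andbC.
  by apply: ler_sum => g _; apply: ler_norm.
by rewrite lerDl sumr_ge0.
Qed.

Lemma flux (f : 'I_(nF T)) j : bounded f ->
  `|dir f 0 j *+ wt f| <= \sum_(g : 'I_(nF T) | ~~ bounded g) `|dir g 0 j *+ wt g|.
Proof.
move=> bf; case: (ltrgt0P (dir f 0 j)) => d.
- have bf' : bounded (opp_flag f) by rewrite (bounded_opp f).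
  have := flux_neg bf'; rewrite (opp_dir bf) (wt_opp f) => /(_ j); rewrite mxE mulNrn normrN; apply.
  by rewrite oppr_lt0.
- exact: flux_neg.
- by rewrite d mul0rn normr0 sumr_ge0.
Qed.
End Flux.

Section Count.
Variable n : nat.
Variable T : ttype n.
Hypothesis og : is_open_graph T.

Lemma card_split : nF T = (#|[set f : 'I_(nF T) | bounded f]| + #|[set f : 'I_(nF T) | ~~ bounded f]|)%N.
Proof.
apply: (etrans (esym (card_ord _))); rewrite -(cardsC [set f : 'I_(nF T) | bounded f]).
by congr (_ + _)%N; apply: eq_card => f; rewrite !inE.
Qed.

Lemma sum_valence : (\sum_(v : 'I_(nV T)) valence v)%N = nF T.
Proof.
rewrite -[nF T]card_ord -sum1_card (partition_big (@fv n T) xpredT) //=.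
apply: eq_bigr => v _; rewrite /valence -sum1_card; apply: eq_bigl => f.
by rewrite inE.
Qed.

Lemma valence3 (v : 'I_(nV T)) : (2 <= nV T)%N -> (3 <= valence v)%N.
Proof.
move=> h2; case: og => _ [_ [_ [_ [hc hv]]]].
case: (hv v) => h1 h2'.
suff : valence v <> 0%N by lia.
have x0 : (0 < nV T)%N by lia.
have x1 : (1 < nV T)%N by lia.
pose x := if val v == 0%N then Ordinal x1 else Ordinal x0.
have xv : x != v.
  apply/negP => /eqP; rewrite /x; case: eqP => e e'; rewrite -e' /= in e; by [] || apply: e.
have := hc v x; case/connectP => p; case: p => [|y p] /=.
  by move=> _ e; rewrite e eqxx in xv.
case/andP => /existsP [f /andP [/eqP fe _]] _ _.
rewrite /valence => /eqP; rewrite cards_eq0 => /eqP E.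
have : f \in [set f : 'I_(nF T) | fv f == v] by rewrite inE fe.
by rewrite E inE.
Qed.

Lemma nV_le3 : (2 <= nV T)%N -> (3 * nV T <= nF T)%N.
Proof.
move=> h2; rewrite -sum_valence -[X in (3 * X)%N]card_ord mulnC -sum_nat_const.
by apply: leq_sum => v _; apply: valence3.
Qed.

Lemma size_bounds (e : nat) :
  (#|[set f : 'I_(nF T) | ~~ bounded f]| <= e)%N ->
  (nV T <= 2 * genus T + e + 1)%N /\ (nF T <= 6 * genus T + 3 * e + 3)%N.
Proof.
move=> he.
have cs := card_split.
have h3 : (2 <= nV T)%N -> (3 * nV T <= nF T)%N := nV_le3.
rewrite /genus /nbounded.
set b := #|[set f | bounded f]| in cs *.
set u := #|[set f | ~~ bounded f]| in cs he *.
lia.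
Qed.
End Count.

Lemma prim_ex n (x : 'rV[int]_n) : primitive x -> exists j, x 0 j != 0.
Proof.
move=> px; case: (pickP (fun j => x 0 j != 0)) => [j hj|H]; first by exists j.
have x0 : x = 2 *: x.
  apply/rowP => j; rewrite !mxE; move: (H j) => /negbFE /eqP ->.
  by rewrite mulr0.
by case: (px _ _ x0).
Qed.

Lemma vec_neq0 n (T : ttype n) (og : is_open_graph T) (h : 'I_(nV T) -> 'rV[rat]_n) (tc : is_tropical_curve h)
  (f : 'I_(nF T)) : dir f *+ wt f != 0.
Proof.
case: tc => pr _; case: (prim_ex (pr f)) => j hj.
apply/eqP => /(congr1 (fun M : 'rV[int]_n => M 0 j)); rewrite mulmxnE mxE => /eqP.
rewrite mulrn_eq0 (negbTE hj) orbF; case: og => _ [_ [hw _]].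
by move=> /eqP e; have := hw f; rewrite e.
Qed.

Section Deg.
Variable n : nat.
Variable Delta : 'rV[int]_n -> nat.
Variable T0 : ttype n.
Hypothesis og0 : is_open_graph T0.
Hypothesis deg0 : has_degree Delta T0.
Hypothesis re0 : realized T0.

Definition SK := undup [seq dir f *+ wt f | f <- enum [pred f : 'I_(nF T0) | ~~ bounded f]].
Definition KK := (\sum_(v <- SK) Delta v)%N.
Definition BB := (\max_(v <- SK) \max_(j < n) `|v ord0 j|%N)%N.

Lemma SK_neq0 v : v \in SK -> v != 0.
Proof.
rewrite mem_undup => /mapP [f _ ->]; case: re0 => h tc; exact: (vec_neq0 og0 tc).
Qed.

Variable T : ttype n.
Hypothesis og : is_open_graph T.
Hypothesis deg : has_degree Delta T.
Variable h : 'I_(nV T) -> 'rV[rat]_n.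
Hypothesis tc : is_tropical_curve h.

Lemma vec_in (f : 'I_(nF T)) : ~~ bounded f -> dir f *+ wt f \in SK.
Proof.
move=> uf; rewrite mem_undup.
have v0 := vec_neq0 og tc f.
have : (0 < Delta (dir f *+ wt f))%N.
  by rewrite (deg v0) card_gt0; apply/set0Pn; exists f; rewrite inE uf eqxx.
rewrite (deg0 v0) card_gt0 => /set0Pn [f0]; rewrite inE => /andP [u0 /eqP <-].
by apply: map_f; rewrite mem_enum.
Qed.

Lemma unb_count : #|[set f : 'I_(nF T) | ~~ bounded f]| = KK.
Proof.
rewrite -sum1_card.
transitivity (\sum_(f : 'I_(nF T) | ~~ bounded f) \sum_(v <- SK | v == dir f *+ wt f) 1)%N.
  apply: eq_big => [f|f uf]; first by rewrite inE.
  move: uf; rewrite inE => uf; rewrite -big_filter sum1_size size_filter count_uniq_mem ?undup_uniq ?vec_in //.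
rewrite (exchange_big_dep xpredT) //= /KK [LHS]big_seq [RHS]big_seq; apply: eq_bigr => v vS.
rewrite (deg (SK_neq0 vS)) -sum1_card; apply: eq_bigl => f.
by rewrite inE eq_sym.
Qed.

Lemma unb_B (f : 'I_(nF T)) j : ~~ bounded f -> `|dir f 0 j *+ wt f| <= (BB%:Z).
Proof.
move=> uf.
have H : (`|(dir f *+ wt f) ord0 j|%N <= BB)%N.
  rewrite /BB; apply: (leq_trans _ (@leq_bigmax_seq _ SK xpredT (fun v : 'rV[int]_n => \max_(j < n) `|v ord0 j|%N) _ (vec_in uf) isT)).
  exact: (@leq_bigmax _ (fun j => `|(dir f *+ wt f) ord0 j|%N) j).
by rewrite mulmxnE in H; rewrite -abszE lez_nat.
Qed.

Lemma all_D (f : 'I_(nF T)) j : `|dir f 0 j *+ wt f| <= ((KK * BB + BB)%N%:Z).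
Proof.
case bf: (bounded f); last first.
  apply: (le_trans (unb_B j (negbT bf))); rewrite lez_nat; lia.
apply: (le_trans (flux og tc j bf)).
apply: (@le_trans _ _ (\sum_(g : 'I_(nF T) | ~~ bounded g) (BB%:Z))).
  by apply: ler_sum => g ug; apply: unb_B.
rewrite (eq_bigl (fun g => g \in [set g : 'I_(nF T) | ~~ bounded g])); last first.
  by move=> g; rewrite inE.
rewrite sumr_const unb_count.
lia.
Qed.
End Deg.

Lemma flag_bounds n (T : ttype n) (og : is_open_graph T) (h : 'I_(nV T) -> 'rV[rat]_n)
  (tc : is_tropical_curve h) (D : nat) :
  (forall (f : 'I_(nF T)) j, `|dir f 0 j *+ wt f| <= D%:Z) ->
  forall f : 'I_(nF T), (wt f <= D)%N /\ forall j, `|dir f 0 j| <= D%:Z.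
Proof.
move=> H f; case: og => _ [_ [hw _]]; have w1 := hw f.
have e : forall j, `|dir f 0 j| * (wt f)%:Z <= D%:Z.
  by move=> j; have := H f j; rewrite normrMn -mulr_natr natz.
split; last first.
  move=> j; have := e j; have : 0 <= `|dir f 0 j| by []. nia.
case: tc => pr _; case: (prim_ex (pr f)) => j hj.
have := e j; move/eqP: hj => hj. nia.
Qed.

Notation Code n D a b := ({ffun 'I_b -> 'I_a} * {ffun 'I_b -> 'I_b} * {ffun 'I_b -> 'I_(D.+1)}
   * {ffun 'I_b -> {ffun 'I_n -> 'I_(D.*2.+1)}})%type.

Notation CodeAll n D A F := {ab : 'I_(A.+1) * 'I_(F.+1) & Code n D ab.1 ab.2}.

Definition decode n D A F (x : CodeAll n D A F) : ttype n :=
  @TType n (tag x).1 (tag x).2 (fun f => (tagged x).1.1.1 f) (fun f => (tagged x).1.1.2 f)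
    (fun f => nat_of_ord ((tagged x).1.2 f))
    (fun f => \row_j ((nat_of_ord ((tagged x).2 f j))%:Z - D%:Z)).

Theorem proposition2p1 (n : nat) (hn : (2 <= n)%N)
  (Delta : 'rV[int]_n -> nat) (g : nat) :
  exists (m : nat) (L : 'I_m -> ttype n),
    forall T : ttype n,
      is_open_graph T -> has_degree Delta T -> genus T = g -> realized T ->
      exists i : 'I_m, ttype_iso T (L i).
Proof.
case: (classic (exists T : ttype n, [/\ is_open_graph T, has_degree Delta T, genus T = g & realized T]));
  last first.
  move=> none; exists 0%N, (fun _ => @TType n 0 0 (fun f => f) (fun f => f) (fun _ => 0%N) (fun _ => 0)).
  by move=> T og dg ge re; exfalso; apply: none; exists T.
case=> T0 [og0 deg0 gen0 re0].
set K := @KK n Delta T0; set B := @BB n T0.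
set D := (K * B + B)%N.
set A := (2 * g + K + 1)%N; set F := (6 * g + 3 * K + 3)%N.
exists #|{: CodeAll n D A F}|, (fun i => decode (enum_val i)).
move=> T og deg ge [h tc].
have hu := unb_count og0 deg0 re0 og deg tc.
have [hV hF] := size_bounds og (e := K) (eq_leq hu).
rewrite ge in hV hF.
have hb := flag_bounds og tc (all_D og0 deg0 re0 og deg tc).
have hV' : (nV T < A.+1)%N by rewrite ltnS.
have hF' : (nF T < F.+1)%N by rewrite ltnS.
pose c : Code n D (nV T) (nF T) := ([ffun f => fv f], [ffun f => opp_flag f],
   [ffun f => inord (wt f)], [ffun f => [ffun j => inord (absz (dir f 0 j + D%:Z))]]).
pose x : CodeAll n D A F :=
  existT (fun ab : 'I_(A.+1) * 'I_(F.+1) => Code n D ab.1 ab.2) (Ordinal hV', Ordinal hF') c.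
exists (enum_rank x); rewrite enum_rankK.
exists (fun v => v), (fun f => f).
split; first by exists (fun v => v).
split; first by exists (fun f => f).
split; first by move=> f; rewrite /= ffunE.
split; first by move=> f; rewrite /= ffunE.
split.
  move=> f; rewrite /= ffunE inordK // ltnS; exact: (proj1 (hb f)).
move=> f; apply/rowP => j; rewrite /= mxE !ffunE inordK.
  have := (proj2 (hb f)) j; rewrite -abszE; lia.
have := (proj2 (hb f)) j; lia.
Qed.
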